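(* Let $\mathfrak m=\mathfrak m_{-1}\oplus\mathfrak m_{-2}$ be a non-degenerate graded nilpotent Lie algebra of depth $2$ over $\mathbb C$, generated by $\mathfrak m_{-1}$, with $\dim\mathfrak m_{-2}=2$. Then the Tanaka prolongation of $\mathfrak m$ is infinite-dimensional.
   Context: A GNLA is a negatively graded Lie algebra $\mathfrak m=\bigoplus_{i\ge1}\mathfrak m_{-i}$ generated by $\mathfrak m_{-1}$; non-degenerate means $\mathfrak m_{-1}$ contains no non-zero central element. The Tanaka prolongation $\mathfrak g(\mathfrak m)$ is defined by $\mathfrak g_i(\mathfrak m)=\mathfrak m_i$ for $i<0$ and recursively, for $k\ge0$, $\mathfrak g_k(\mathfrak m)=\{\phi:\mathfrak m\to\bigoplus_{i<k}\mathfrak g_i(\mathfrak m)\text{ linear}\mid \phi(\mathfrak m_{-i})\subset\mathfrak g_{k-i}(\mathfrak m),\ \phi([x,y])=[\phi(x),y]+[x,\phi(y)]\ \forall x,y\in\mathfrak m\}$. *)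

(* Defs.v *)
From HB Require Import structures.
From mathcomp Require Import all_boot all_order all_algebra.
Set Implicit Arguments. Unset Strict Implicit. Unset Printing Implicit Defensive.
Import GRing.Theory Num.Theory.
Local Open Scope ring_scope.

(* A depth-2 graded Lie algebra  m = m_{-1} (+) m_{-2}  with
   m_{-1} = 'rV[F]_n, m_{-2} = 'rV[F]_2 and bracket
   [x,y] = omega x y on m_{-1} x m_{-1} (all other brackets in m vanish).

   Tanaka prolongation: degree d = L - 2 is stored at level L : nat.
   Level 0 = m_{-2}, level 1 = m_{-1}, and an element of degree p >= 0
   (level p+2) is a graded map phi : m -> (+)_{i<p} g_i, i.e. a pair
   (phi|_{m_{-1}} : m_{-1} -> g_{p-1}, phi|_{m_{-2}} : m_{-2} -> g_{p-2}). *)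

Section Tanaka.
Variable F : fieldType.
Variable n : nat.

Fixpoint G (L : nat) : Type :=
  match L with
  | 0 => 'rV[F]_2
  | 1 => 'rV[F]_n
  | S ((S l) as l') => (('rV[F]_n -> G l') * ('rV[F]_2 -> G l))%type
  end.

(* (the inner matches pass the recursive call at level l' = L-1 as an
   argument, to satisfy Rocq's guard condition) *)
Fixpoint gzero (L : nat) : G L :=
  match L return G L with
  | 0 => 0
  | S l' =>
      match l' as k return G k -> G k.+1 with
      | 0 => fun _ => 0
      | S l => fun zl' => (fun _ => zl', fun _ => @gzero l)
      end (@gzero l')
  end.

Fixpoint gadd (L : nat) : G L -> G L -> G L :=
  match L return G L -> G L -> G L with
  | 0 => fun a b => a + b
  | S l' =>
      match l' as k return (G k -> G k -> G k) -> G k.+1 -> G k.+1 -> G k.+1 with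
      | 0 => fun _ a b => a + b
      | S l => fun addl' f g =>
          (fun x => addl' (f.1 x) (g.1 x), fun z => @gadd l (f.2 z) (g.2 z))
      end (@gadd l')
  end.

Fixpoint gscale (L : nat) (c : F) : G L -> G L :=
  match L return G L -> G L with
  | 0 => fun a => c *: a
  | S l' =>
      match l' as k return (G k -> G k) -> G k.+1 -> G k.+1 with
      | 0 => fun _ a => c *: a
      | S l => fun scl' f =>
          (fun x => scl' (f.1 x), fun z => @gscale l c (f.2 z))
      end (@gscale l' c)
  end.

Definition lin_into (k L : nat) (f : 'rV[F]_k -> G L) : Prop :=
  forall (a : F) x y, f (a *: x + y) = gadd (gscale a (f x)) (f y).

Variable omega : 'rV[F]_n -> 'rV[F]_n -> 'rV[F]_2.

Definition br1 (l : nat) : G l.+1 -> 'rV[F]_n -> G l :=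
  match l return G l.+1 -> 'rV[F]_n -> G l with
  | 0 => fun x y => omega x y
  | S l' => fun f y => f.1 y
  end.

Definition brL1 (l : nat) : 'rV[F]_n -> G l.+1 -> G l :=
  match l return 'rV[F]_n -> G l.+1 -> G l with
  | 0 => fun x y => omega x y
  | S l' => fun x f => @gscale l'.+1 (-1) (f.1 x)
  end.

Definition br2 (l : nat) (f : G l.+2) (z : 'rV[F]_2) : G l := f.2 z.

Definition brL2 (l : nat) (z : 'rV[F]_2) (f : G l.+2) : G l := @gscale l (-1) (f.2 z).

(* derivation condition phi([x,y]) = [phi x, y] + [x, phi y] on
   homogeneous x, y (phi of degree p, stored at level p+2);
   brackets landing in degree < -2 are zero and omitted. *)
Definition condA (p : nat) (phi : G p.+2) : Prop :=
  forall x y : 'rV[F]_n,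
    phi.2 (omega x y) = gadd (br1 (phi.1 x) y) (brL1 x (phi.1 y)).

Definition condB (p : nat) : G p.+2 -> Prop :=
  match p return G p.+2 -> Prop with
  | 0 => fun _ => True
  | S q => fun phi => forall (x : 'rV[F]_n) (z : 'rV[F]_2),
      gadd (br2 (phi.1 x) z) (brL1 x (phi.2 z)) = gzero q
  end.

Definition condC (p : nat) : G p.+2 -> Prop :=
  match p return G p.+2 -> Prop with
  | 0 => fun _ => True
  | 1 => fun _ => True
  | S (S q) => fun phi => forall (z w : 'rV[F]_2),
      gadd (br2 (phi.2 z) w) (brL2 z (phi.2 w)) = gzero q
  end.

Fixpoint mem_g (L : nat) : G L -> Prop :=
  match L return G L -> Prop with
  | 0 => fun _ => True
  | S p' =>
      match p' as k return (G k -> Prop) -> G k.+1 -> Prop with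
      | 0 => fun _ _ => True
      | S p => fun memp' phi =>
          [/\ @lin_into n p.+1 phi.1, @lin_into 2 p phi.2,
              (forall x, memp' (phi.1 x)),
              (forall z, @mem_g p (phi.2 z)) &
              [/\ @condA p phi, @condB p phi & @condC p phi]]
      end (@mem_g p')
  end.

(* an element of g(m) = (+)_{i >= -2} g_i : a finitely supported family of
   homogeneous components, each lying in the prolongation *)
Definition in_prolongation (e : forall L, G L) : Prop :=
  (forall L, mem_g (e L)) /\ exists B, forall L, (B <= L)%N -> e L = gzero L.

Definition lin_comb (d : nat) (c : 'I_d -> F) (e : 'I_d -> forall L, G L)
    (L : nat) : G L :=
  foldr (fun i acc => gadd (gscale (c i) (e i L)) acc) (gzero L) (enum 'I_d).

Definition prolongation_infinite_dim : Prop :=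
  forall d : nat, exists e : 'I_d -> forall L, G L,
    (forall i, in_prolongation (e i)) /\
    (forall c : 'I_d -> F, (forall L, lin_comb c e L = gzero L) ->
        forall i, c i = 0).

End Tanaka.

(* Main.v *)
Require Import Defs.
From HB Require Import structures.
From mathcomp Require Import all_boot all_order all_algebra.
From Stdlib Require Import FunctionalExtensionality Classical.
Import GRing.Theory Num.Theory.
Local Open Scope ring_scope.
Set Implicit Arguments. Unset Strict Implicit. Unset Printing Implicit Defensive.

Lemma nat_ind2 (P : nat -> Prop) : P 0%N -> P 1%N ->
  (forall L, P L -> P L.+1 -> P L.+2) -> forall L, P L.
Proof.
move=> H0 H1 HS L; suff: P L /\ P L.+1 by case.
elim: L => [|L [IH1 IH2]]; first by split.
by split=> //; apply: HS.
Qed.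

Section Gen.
Variable F : fieldType.
Variable n : nat.

Lemma gzeroSS L : gzero F n L.+2 = (fun _ => gzero F n L.+1, fun _ => gzero F n L).
Proof. by []. Qed.
Lemma gscaleSS L c (f : ('rV[F]_n -> G F n L.+1) * ('rV[F]_2 -> G F n L)) :
  @gscale F n L.+2 c f = (fun x => gscale c (f.1 x), fun z => gscale c (f.2 z)).
Proof. by []. Qed.
Lemma gaddSS L (f g : ('rV[F]_n -> G F n L.+1) * ('rV[F]_2 -> G F n L)) :
  @gadd F n L.+2 f g = (fun x => gadd (f.1 x) (g.1 x), fun z => gadd (f.2 z) (g.2 z)).
Proof. by []. Qed.

Lemma gscale0 L c : gscale c (gzero F n L) = gzero F n L.
Proof.
elim/nat_ind2: L => [||L IH1 IH2]; first exact: scaler0.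
  exact: scaler0.
rewrite gscaleSS gzeroSS; congr pair; apply: functional_extensionality => x.
  exact: IH2.
exact: IH1.
Qed.

Lemma gadd0 L : gadd (gzero F n L) (gzero F n L) = gzero F n L.
Proof.
elim/nat_ind2: L => [||L IH1 IH2]; first exact: addr0.
  exact: addr0.
rewrite gaddSS gzeroSS; congr pair; apply: functional_extensionality => x.
  exact: IH2.
exact: IH1.
Qed.

Variable omega : 'rV[F]_n -> 'rV[F]_n -> 'rV[F]_2.
Hypothesis omega0l : forall y, omega 0 y = 0.
Hypothesis omega0r : forall x, omega x 0 = 0.

Lemma memSS L (phi : ('rV[F]_n -> G F n L.+1) * ('rV[F]_2 -> G F n L)) :
  @mem_g F n omega L.+2 phi <->
  [/\ @lin_into F n n L.+1 phi.1, @lin_into F n 2 L phi.2,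
      (forall x, mem_g omega (phi.1 x)),
      (forall z, mem_g omega (phi.2 z)) &
      [/\ @condA F n omega L phi, @condB F n omega L phi & @condC F n L phi]].
Proof. by []. Qed.

Lemma brL1_zero l x : brL1 omega x (gzero F n l.+1) = gzero F n l.
Proof. case: l => [|l]; first exact: omega0r. change (gscale (-1) (gzero F n l.+1) = gzero F n l.+1); exact: gscale0. Qed.

Lemma br1_zero l y : br1 omega (gzero F n l.+1) y = gzero F n l.
Proof. case: l => [|l]; [exact: omega0l | by []]. Qed.

Lemma mem_gzero L : mem_g omega (gzero F n L).
Proof.
elim/nat_ind2: L => [||L IH1 IH2]; try by [].
rewrite gzeroSS; apply/memSS; split.
- by move=> a x y; rewrite gscale0 gadd0.
- by move=> a x y; rewrite gscale0 gadd0.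
- by move=> x.
- by move=> z.
- split.
  + move=> x y.
    change (gzero F n L = gadd (br1 omega (gzero F n L.+1) y) (brL1 omega x (gzero F n L.+1))).
    by rewrite br1_zero brL1_zero gadd0.
  + case: L IH1 IH2 => [|L] _ _ //; move=> x z.
    change (gadd (gzero F n L) (brL1 omega x (gzero F n L.+1)) = gzero F n L).
    by rewrite brL1_zero gadd0.
  + case: L IH1 IH2 => [|[|L]] _ _ //; move=> z w.
    change (gadd (gzero F n L) (gscale (-1) (gzero F n L)) = gzero F n L).
    by rewrite gscale0 gadd0.
Qed.

Variable v : 'rV[F]_n.
Variable mu : 'rV[F]_n -> F.
Variable z0 : 'rV[F]_2.
Hypothesis Hmu : forall a x y, mu (a *: x + y) = a * mu x + mu y.
Hypothesis Hv : forall y, omega v y = mu y *: z0.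
Hypothesis Hvr : forall x, omega x v = - (mu x *: z0).
Hypothesis HZl : forall a x y, omega (a *: x) y = a *: omega x y.
Hypothesis HZr : forall a x y, omega x (a *: y) = a *: omega x y.

Fixpoint Sf (j : nat) (c : F) : G F n j.+1 :=
  match j return G F n j.+1 with
  | 0%N => c *: v
  | l.+1 => (fun x => Sf l (c * mu x), fun _ => gzero F n l)
  end.

Lemma SfZ L a c : gscale a (Sf L c) = Sf L (a * c).
Proof.
elim: L a c => [|L IH] a c; first exact: scalerA.
rewrite [LHS]gscaleSS; congr pair; apply: functional_extensionality => x.
  by change (gscale a (Sf L (c * mu x)) = Sf L (a * c * mu x)); rewrite IH mulrA.
exact: gscale0.
Qed.

Lemma SfD L c d : gadd (Sf L c) (Sf L d) = Sf L (c + d).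
Proof.
elim: L c d => [|L IH] c d; first by rewrite /= scalerDl.
rewrite [LHS]gaddSS; congr pair; apply: functional_extensionality => x.
  by change (gadd (Sf L (c * mu x)) (Sf L (d * mu x)) = Sf L ((c + d) * mu x)); rewrite IH mulrDl.
exact: gadd0.
Qed.

Lemma Sf0 L : Sf L 0 = gzero F n L.+1.
Proof.
elim: L => [|L IH]; first exact: scale0r.
rewrite gzeroSS.
change ((fun x : 'rV[F]_n => Sf L (0 * mu x), fun _ : 'rV[F]_2 => gzero F n L) = (fun _ : 'rV[F]_n => gzero F n L.+1, fun _ : 'rV[F]_2 => gzero F n L)).
congr pair; apply: functional_extensionality => x.
by rewrite mul0r IH.
Qed.

Lemma mem_Sf L c : mem_g omega (Sf L c).
Proof.
elim: L c => [|L IH] c; first by [].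
apply/memSS; split.
- move=> a x y.
  change (Sf L (c * mu (a *: x + y)) = gadd (gscale a (Sf L (c * mu x))) (Sf L (c * mu y))).
  by rewrite Hmu mulrDr SfZ SfD mulrCA.
- move=> a x y.
  change (gzero F n L = gadd (gscale a (gzero F n L)) (gzero F n L)).
  by rewrite gscale0 gadd0.
- by move=> x; apply: IH.
- by move=> z; apply: mem_gzero.
- split.
  + move=> x y. case: L IH => [|L] IH.
    * change (0 = omega ((c * mu x) *: v) y + omega x ((c * mu y) *: v)).
      by rewrite HZl HZr Hv Hvr scalerN scalerA scalerA mulrAC subrr.
    * change (gzero F n L.+1 = gadd (Sf L (c * mu x * mu y)) (gscale (-1) (Sf L (c * mu y * mu x)))).
      by rewrite SfZ SfD mulrAC mulN1r subrr Sf0.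
  + case: L IH => [|L] IH //; move=> x z.
    change (gadd (gzero F n L) (brL1 omega x (gzero F n L.+1)) = gzero F n L).
    by rewrite brL1_zero gadd0.
  + case: L IH => [|[|L]] IH //; move=> z w.
    change (gadd (gzero F n L) (gscale (-1) (gzero F n L)) = gzero F n L).
    by rewrite gscale0 gadd0.
Qed.

Variable x0 : 'rV[F]_n.
Hypothesis Hx0 : mu x0 = 1.
Hypothesis vnz : v != 0.

Fixpoint ev (L : nat) : G F n L.+1 -> 'rV[F]_n :=
  match L return G F n L.+1 -> 'rV[F]_n with
  | 0%N => fun f => f
  | l.+1 => fun f => @ev l (f.1 x0)
  end.

Lemma ev_add L f g : @ev L (gadd f g) = @ev L f + @ev L g.
Proof. elim: L f g => [|L IH] f g; first by []. exact: (IH (f.1 x0) (g.1 x0)). Qed.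

Lemma ev_scale L a f : @ev L (gscale a f) = a *: @ev L f.
Proof. elim: L f => [|L IH] f; first by []. exact: (IH (f.1 x0)). Qed.

Lemma ev_zero L : @ev L (gzero F n L.+1) = 0.
Proof. elim: L => [|L IH]; first by []. exact: IH. Qed.

Lemma ev_Sf L c : @ev L (Sf L c) = c *: v.
Proof. elim: L c => [|L IH] c; first by []. by rewrite /= IH Hx0 mulr1. Qed.

Definition ee (i : nat) (L : nat) : G F n L :=
  match L return G F n L with
  | 0%N => gzero F n 0
  | l.+1 => if l == i.+1 then Sf l 1 else gzero F n l.+1
  end.

Lemma infdim : prolongation_infinite_dim omega.
Proof.
move=> d; exists (fun i : 'I_d => ee i); split.
  move=> i; split.
    case=> [|l]; first by [].
    change (mem_g omega (if l == i.+1 then Sf l 1 else gzero F n l.+1)).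
    by case: ifP => _; [exact: mem_Sf | exact: mem_gzero].
  exists i.+3 => -[|l] // Hl.
  change ((if l == i.+1 then Sf l 1 else gzero F n l.+1) = gzero F n l.+1).
  by case: ifP => // /eqP E; move: Hl; rewrite E ltnn.
move=> c Hc i.
have := congr1 (@ev i.+1) (Hc i.+2).
rewrite ev_zero /lin_comb.
have -> : forall s : seq 'I_d, @ev i.+1 (foldr (fun j acc => gadd (gscale (c j) (ee j i.+2)) acc)
     (gzero F n i.+2) s) = \sum_(j <- s) c j *: @ev i.+1 (ee j i.+2).
  elim=> [|a s IH]; first by rewrite big_nil ev_zero.
  by rewrite big_cons -IH -ev_scale -ev_add.
have Hee : forall j : 'I_d, @ev i.+1 (ee j i.+2) = if j == i then v else 0.
  move=> j.
  change (@ev i.+1 (if i.+1 == j.+1 then Sf i.+1 1 else gzero F n i.+2) = if j == i then v else 0).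
  rewrite eqSS eq_sym.
  have -> : (j == i :> nat) = (j == i) by [].
  by case: ifP => _; [rewrite ev_Sf scale1r | exact: ev_zero].
under eq_bigr do rewrite Hee.
rewrite (bigD1_seq i) ?mem_enum ?enum_uniq // eqxx.
rewrite big1_seq; last first.
  by move=> j /andP [Hj _]; rewrite (negbTE Hj) scaler0.
rewrite [X in X = 0 -> _]/= addr0 => /eqP.
by rewrite scaler_eq0 (negbTE vnz) orbF => /eqP.
Qed.
End Gen.

Lemma pencil (F : closedFieldType) m (A B : 'M[F]_m) : m != 0%N ->
  exists v : 'rV_m, exists a b : F,
    [/\ v != 0, (a != 0) || (b != 0) & a *: (v *m A) + b *: (v *m B) = 0].
Proof.
move=> m0.
case: (boolP (\det B == 0)) => [/det0P [v vnz vB] | dB].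
  exists v, 0, 1; split => //; first by rewrite oner_eq0 orbT.
  by rewrite vB scale0r scaler0 addr0.
have Bu : B \in unitmx by rewrite unitmxE unitfE.
have : size (char_poly (A *m invmx B)) != 1%N by rewrite size_char_poly eqSS.
move/closed_rootP => [l Hl].
have /eigenvalueP [v Hv vnz] : eigenvalue (A *m invmx B) l by rewrite eigenvalue_root_char.
exists v, 1, (-l); split => //; first by rewrite oner_eq0.
have -> : v *m A = l *: (v *m B).
  by rewrite -(mulmxKV Bu (v *m A)) -[v *m A *m _]mulmxA Hv scalemxAl.
by rewrite scale1r scaleNr addrN.
Qed.

Lemma line (F : fieldType) n (f : 'rV[F]_n -> 'rV[F]_2)
  (flin : forall a x y, f (a *: x + y) = a *: f x + f y) y0 (Hy0 : f y0 != 0)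
  (k k' : 'I_2) (Hkk : forall j : 'I_2, j = k \/ j = k') r
  (Hr : forall y, f y 0 k' = r * f y 0 k) :
  exists mu : 'rV[F]_n -> F, [/\ forall a x y, mu (a *: x + y) = a * mu x + mu y,
     forall y, f y = mu y *: f y0 & mu y0 = 1].
Proof.
have Hz : f y0 0 k != 0.
  apply: contraNneq Hy0 => H; apply/eqP/rowP => j; rewrite mxE.
  by case: (Hkk j) => ->; [ | rewrite Hr H mulr0].
exists (fun y => f y 0 k / f y0 0 k); split.
- by move=> a x y; rewrite flin !mxE mulrDl mulrA.
- move=> y; apply/rowP => j; rewrite mxE; case: (Hkk j) => ->.
    by rewrite divfK.
  by rewrite !Hr mulrCA divfK.
- by rewrite divff.
Qed.

Theorem theorem4 (F : numClosedFieldType) (n : nat)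
    (omega : 'rV[F]_n -> 'rV[F]_n -> 'rV[F]_2)
    (omega_linl : forall (a : F) x x' y,
        omega (a *: x + x') y = a *: omega x y + omega x' y)
    (omega_linr : forall (a : F) x y y',
        omega x (a *: y + y') = a *: omega x y + omega x y')
    (omega_alt : forall x, omega x x = 0)
    (generated : forall z : 'rV[F]_2, exists s : seq (F * 'rV[F]_n * 'rV[F]_n),
        z = \sum_(t <- s) t.1.1 *: omega t.1.2 t.2)
    (nondegenerate : forall x, (forall y, omega x y = 0) -> x = 0) :
  prolongation_infinite_dim omega.
Proof.
have omega0l : forall y, omega 0 y = 0.
  by move=> y; have := omega_linl (-1) 0 0 y; rewrite scaler0 addr0 scaleN1r addNr.
have omega0r : forall x, omega x 0 = 0.
  by move=> x; have := omega_linr (-1) x 0 0; rewrite scaler0 addr0 scaleN1r addNr.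
have HZl : forall a x y, omega (a *: x) y = a *: omega x y.
  by move=> a x y; have := omega_linl a x 0 y; rewrite addr0 omega0l addr0.
have HZr : forall a x y, omega x (a *: y) = a *: omega x y.
  by move=> a x y; have := omega_linr a x y 0; rewrite addr0 omega0r addr0.
have HDl : forall x x' y, omega (x + x') y = omega x y + omega x' y.
  by move=> x x' y; have := omega_linl 1 x x' y; rewrite !scale1r.
have HDr : forall x y y', omega x (y + y') = omega x y + omega x y'.
  by move=> x y y'; have := omega_linr 1 x y y'; rewrite !scale1r.
have antisym : forall x y, omega x y = - omega y x.
  move=> x y; have := omega_alt (x + y).
  rewrite HDl !HDr !omega_alt add0r addr0 => /eqP; rewrite addr_eq0 => /eqP //.
have n0 : n != 0%N.
  apply/negP => /eqP n0.
  have [s Hs] := generated (const_mx 1).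
  have z0 : forall x : 'rV[F]_n, x = 0.
    by move=> x; apply/rowP => -[j Hj]; exfalso; move: Hj; rewrite n0.
  rewrite big1_seq in Hs; last by move=> t _; rewrite (z0 t.1.2) omega0l scaler0.
  by have := congr1 (fun M : 'rV[F]_2 => M 0 0) Hs; rewrite !mxE => /eqP; rewrite oner_eq0.
have Hsuml : forall (I : Type) (r : seq I) (P : pred I) (f : I -> 'rV[F]_n) y,
    omega (\sum_(i <- r | P i) f i) y = \sum_(i <- r | P i) omega (f i) y.
  move=> I r P f y; apply: (big_rec2 (fun a b => omega a y = b)); first exact: omega0l.
  by move=> i a b _ <-; rewrite HDl.
have Hsumr : forall (I : Type) (r : seq I) (P : pred I) (f : I -> 'rV[F]_n) x,
    omega x (\sum_(i <- r | P i) f i) = \sum_(i <- r | P i) omega x (f i).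
  move=> I r P f x; apply: (big_rec2 (fun a b => omega x a = b)); first exact: omega0r.
  by move=> i a b _ <-; rewrite HDr.
have HA : forall (v : 'rV[F]_n) (j : 'I_n) (k : 'I_2),
    (v *m \matrix_(i, j) omega (delta_mx 0 i) (delta_mx 0 j) 0 k) 0 j
      = omega v (delta_mx 0 j) 0 k.
  move=> v j k; rewrite mxE [in RHS](row_sum_delta v) Hsuml summxE.
  by apply: eq_bigr => i _; rewrite HZl !mxE.
have [v [a [b [vnz ab Hab]]]] := pencil
  (\matrix_(i, j) omega (delta_mx 0 i) (delta_mx 0 j) 0 0)
  (\matrix_(i, j) omega (delta_mx 0 i) (delta_mx 0 j) 0 1) n0.
have Hj : forall j, a * omega v (delta_mx 0 j) 0 0 + b * omega v (delta_mx 0 j) 0 1 = 0.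
  move=> j; rewrite -!HA.
  move/rowP: Hab => /(_ j).
  rewrite mxE [X in X + _]mxE [X in _ + X]mxE mxE => ->.
  by rewrite mxE.
have Hall : forall y, a * omega v y 0 0 + b * omega v y 0 1 = 0.
  move=> y; rewrite (row_sum_delta y) Hsumr !summxE !mulr_sumr -big_split /=.
  apply: big1 => j _; rewrite HZr !mxE mulrCA [b * _]mulrCA -mulrDr Hj mulr0 //.
have [y0 Hy0] : exists y0, omega v y0 != 0.
  apply: NNPP => H; move/negP: vnz; apply; apply/eqP; apply: nondegenerate => y.
  apply/eqP; apply: NNPP => H2; apply: H; by exists y; apply/negP.
have flin : forall a x y, omega v (a *: x + y) = a *: omega v x + omega v y.
  by move=> a' x y; apply: omega_linr.
have Hkk : forall j : 'I_2, j = 0 \/ j = 1.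
  by case=> [[|[|//]] Hj']; [left | right]; apply: val_inj.
have Hkk' : forall j : 'I_2, j = 1 \/ j = 0.
  by move=> j; case: (Hkk j); [right | left].
have [mu [Hmu Hv Hx0]] : exists mu : 'rV[F]_n -> F, [/\ forall a x y, mu (a *: x + y) = a * mu x + mu y,
     forall y, omega v y = mu y *: omega v y0 & mu y0 = 1].
  case: (boolP (a == 0)) => [/eqP a0 | an0].
    have bn0 : b != 0 by move: ab; rewrite a0 eqxx.
    apply: (line flin Hy0 Hkk (r := 0)) => y.
    have := Hall y; rewrite a0 mul0r add0r => /eqP.
    by rewrite mulf_eq0 (negbTE bn0) => /eqP.
  apply: (line flin Hy0 Hkk' (r := - (b / a))) => y.
  apply: (mulfI an0).
  rewrite mulNr mulrN mulrA [a * (b / a)]mulrCA divff // mulr1.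
  by apply/eqP; rewrite -addr_eq0; apply/eqP; apply: Hall.
apply: (infdim omega0l omega0r Hmu Hv _ HZl HZr Hx0 vnz).
by move=> x; rewrite antisym Hv.
Qed.
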